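(* Let $\epsilon>0$, $k\ge 1$, and let $\mathcal{R}$ be any collection of RR sets such that $|n\,\mathcal{F_R}(u)-I_u|\le\frac{\epsilon n}{4}$ for all $u\in V$. Then: (1) if $I_u\ge I^k$, then $n\,\mathcal{F_R}(u)\ge n\,\mathcal{F_R}^k-\frac{\epsilon n}{2}$; and (2) if $I_u\le I^k-\epsilon n$, then $n\,\mathcal{F_R}(u)\le n\,\mathcal{F_R}^k-\frac{\epsilon n}{2}$.
   Context: $G=\langle V,E,w\rangle$ is a network with $n=|V|\ge k$ under the Linear Threshold or Independent Cascade model; $I_u$ is the influence spread (expected number of nodes reachable from $u$ via live edges) of node $u$. $I^k$ is the $k$-th largest value among $\{I_u:u\in V\}$. For a collection $\mathcal{R}$ of RR sets, $\mathcal{F_R}(u)$ is the fraction of RR sets in $\mathcal{R}$ containing $u$, and $\mathcal{F_R}^k$ is the $k$-th largest value among $\{\mathcal{F_R}(u):u\in V\}$. *)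

(* Defs.v *)
From HB Require Import structures.
From mathcomp Require Import all_boot all_order all_algebra.
Set Implicit Arguments. Unset Strict Implicit. Unset Printing Implicit Defensive.
Import Order.TTheory GRing.Theory Num.Theory.
Local Open Scope ring_scope.

(* A network G = <V, E, w> is given by a finite vertex type V and a weight
   function w : V -> V -> R; the edge (x,y) is present iff w x y != 0. *)

Inductive diffusion_model := IC | LT.

Definition valid_weights (R : realFieldType) (V : finType) (m : diffusion_model)
  (w : V -> V -> R) : Prop :=
  (forall x y, 0 <= w x y <= 1) /\
  (m = LT -> forall y, \sum_(x : V) w x y <= 1).

Definition reach_count (V : finType) (L : {set V * V}) (u : V) : nat :=
  #|[set v | connect (fun x y => (x, y) \in L) u v]|.

Definition IC_prob (R : realFieldType) (V : finType) (w : V -> V -> R)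
  (L : {set V * V}) : R :=
  \prod_(e : V * V) (if e \in L then w e.1 e.2 else 1 - w e.1 e.2).

(* LT: each node y independently picks at most one incoming live edge,
   (x,y) with probability w x y, none with probability 1 - sum_x w x y. *)
Definition LT_prob (R : realFieldType) (V : finType) (w : V -> V -> R)
  (p : {ffun V -> option V}) : R :=
  \prod_(y : V) (match p y with
                 | Some x => w x y
                 | None => 1 - \sum_(x : V) w x y end).

Definition LT_graph (V : finType) (p : {ffun V -> option V}) : {set V * V} :=
  [set e : V * V | p e.2 == Some e.1].

Definition influence (R : realFieldType) (V : finType) (m : diffusion_model)
  (w : V -> V -> R) (u : V) : R :=
  match m with
  | IC => \sum_(L : {set V * V}) IC_prob w L * (reach_count L u)%:R
  | LT => \sum_(p : {ffun V -> option V}) LT_prob w p * (reach_count (LT_graph p) u)%:R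
  end.

Definition frac_cover (R : realFieldType) (V : finType) (Rs : seq {set V}) (u : V) : R :=
  (count (fun S : {set V} => u \in S) Rs)%:R / (size Rs)%:R.

(* k-th largest value (k >= 1) of f over V, counted with multiplicity. *)
Definition kth_largest (R : realFieldType) (V : finType) (f : V -> R) (k : nat) : R :=
  nth 0 (sort (fun a b : R => b <= a) (map f (enum V))) k.-1.
Arguments frac_cover {R V} Rs u.

(* Main.v *)
Require Import Defs.
From HB Require Import structures.
From mathcomp Require Import all_boot all_order all_algebra.
From mathcomp Require Import lra zify.
Import Order.TTheory GRing.Theory Num.Theory.
Local Open Scope ring_scope.

Section Aux.
Variable R : realFieldType.
Let ge_rel := (fun a b : R => b <= a).

Lemma ge_tr : transitive ge_rel.
Proof. move=> a b c /= h1 h2; exact: le_trans h2 h1. Qed.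
Lemma ge_refl : reflexive ge_rel.
Proof. by move=> a; rewrite /ge_rel. Qed.
Lemma ge_tot : total ge_rel.
Proof. by move=> a b; rewrite /ge_rel orbC le_total. Qed.

Lemma sortedA (s : seq R) k : (1 <= k)%N -> (k <= size s)%N -> sorted ge_rel s ->
  (k <= count (fun y => (nth 0 s k.-1 <= y)%R) s)%N.
Proof.
move=> k1 ks so.
rewrite -{2}(cat_take_drop k s) count_cat.
have -> : count (fun y => (nth 0 s k.-1 <= y)%R) (take k s) = k.
  have Hall : all (fun y => (nth 0 s k.-1 <= y)%R) (take k s).
  { apply/(all_nthP 0) => i; rewrite size_takel // => ik.
    rewrite nth_take //.
    have := sorted_leq_nth ge_tr ge_refl 0 so.
    move=> H; apply: (H i k.-1); rewrite ?inE /=; clear H so ge_rel; lia. }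
  move: Hall; rewrite all_count => /eqP ->; by rewrite size_takel.
by rewrite leq_addr.
Qed.

Lemma sortedB (s : seq R) k : (1 <= k)%N -> (k <= size s)%N -> sorted ge_rel s ->
  (count (fun y => (nth 0 s k.-1 < y)%R) s < k)%N.
Proof.
move=> k1 ks so.
rewrite -{2}(cat_take_drop k.-1 s) count_cat.
have -> : count (fun y => (nth 0 s k.-1 < y)%R) (drop k.-1 s) = 0%N.
  apply/eqP; rewrite -leqn0 leqNgt -has_count; apply/negP => /(has_nthP 0) [i].
  rewrite size_drop nth_drop => ik.
  have := sorted_leq_nth ge_tr ge_refl 0 so.
  move=> H; have := H k.-1 (k.-1 + i)%N; rewrite /ge_rel => H2.
  by rewrite ltNge H2 //; rewrite ?inE /=; clear H H2 so; have {}ik : (i < @size R s - k.-1)%N := ik; lia.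
rewrite addn0; apply: leq_ltn_trans (count_size _ _) _.
have ks1 : (k.-1 <= size s)%N by lia.
rewrite size_takel //; lia.
Qed.

Lemma kth_count (V : finType) (f : V -> R) (P : pred R) :
  count P (sort ge_rel (map f (enum V))) = count (fun x => P (f x)) (enum V).
Proof. by rewrite (permP (permEl (perm_sort ge_rel _))) count_map. Qed.

Lemma kth_mono (V : finType) (g h : V -> R) (a b c : R) k :
  0 < a -> 0 < b ->
  (1 <= k)%N -> (k <= #|V|)%N -> (forall x, a * g x <= b * h x + c) ->
  a * kth_largest g k <= b * kth_largest h k + c.
Proof.
move=> a0 b0 k1 kV H.
set tg := kth_largest g k; set th := kth_largest h k.
have ss : size (sort ge_rel (map g (enum V))) = #|V| by rewrite size_sort size_map cardT.
have st : size (sort ge_rel (map h (enum V))) = #|V| by rewrite size_sort size_map cardT.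
have A : (k <= count (fun x => (tg <= g x)%R) (enum V))%N.
  rewrite -(@kth_count _ g (fun y => tg <= y)).
  apply: sortedA => //; first by rewrite ss.
  exact: sort_sorted ge_tot _.
have B : (count (fun x => (th < h x)%R) (enum V) < k)%N.
  rewrite -(@kth_count _ h (fun y => th < y)).
  apply: sortedB => //; first by rewrite st.
  exact: sort_sorted ge_tot _.
rewrite -lerBlDr leNgt; apply/negP => lt.
have : (count (fun x => (tg <= g x)%R) (enum V) <= count (fun x => (th < h x)%R) (enum V))%N.
  apply: sub_count => x /= hx.
  have h1 := H x.
  have h2 : a * tg <= a * g x by rewrite ler_pM2l.
  rewrite -(ltr_pM2l b0); lra.
lia.
Qed.
End Aux.

Theorem lemma6p1 (R : realFieldType) (V : finType) (m : diffusion_model)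
  (w : V -> V -> R) (eps : R) (k : nat) (Rs : seq {set V}) :
  valid_weights m w ->
  0 < eps -> (1 <= k)%N -> (k <= #|V|)%N ->
  (forall u : V,
     `| #|V|%:R * frac_cover Rs u - influence m w u | <= eps * #|V|%:R / 4) ->
  forall u : V,
    (influence m w u >= kth_largest (influence m w) k ->
       #|V|%:R * frac_cover Rs u >=
       #|V|%:R * kth_largest (frac_cover Rs) k - eps * #|V|%:R / 2) /\
    (influence m w u <= kth_largest (influence m w) k - eps * #|V|%:R ->
       #|V|%:R * frac_cover Rs u <=
       #|V|%:R * kth_largest (frac_cover Rs) k - eps * #|V|%:R / 2).
Proof.
move=> _ e0 k1 kV Hd u.
have n0 : 0 < #|V|%:R :> R by rewrite ltr0n; lia.
have Hb : forall x, #|V|%:R * frac_cover Rs x <= 1 * influence m w x + eps * #|V|%:R / 4.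
  by move=> x; have := Hd x; rewrite ler_norml => /andP[_]; lra.
have Ha : forall x, 1 * influence m w x <= #|V|%:R * frac_cover Rs x + eps * #|V|%:R / 4.
  by move=> x; have := Hd x; rewrite ler_norml => /andP[]; lra.
have K1 := @kth_mono R V _ _ _ _ _ _ n0 ltr01 k1 kV Hb.
have K2 := @kth_mono R V _ _ _ _ _ _ ltr01 n0 k1 kV Ha.
have := Hd u; rewrite ler_norml => /andP[H1 H2].
have en : 0 < eps * #|V|%:R by rewrite mulr_gt0.
split => H; lra.
Qed.
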